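(* Let $F:\mathbb C^n\to\mathbb C^n$ be a square system of polynomials, and let $I\in\mathbb{IC}^n$ be a strong interval approximate zero of $F$, witnessed by a point $\tilde x\in I$ and an invertible matrix $Y\in\mathbb C^{n\times n}$ (so that $K_{\tilde x,Y}(I)\subset I$ and $\sqrt2\,\lVert \mathbf 1_n - Y\cdot\square\mathrm JF(I)\rVert_\infty<1$). Let $x^*\in I$ be the unique zero of $F$ in $I$. Let $x\in I$ be any point, set $x_0:=x$ and $x_i:=x_{i-1}-Y\,F(x_{i-1})$ for $i\ge 1$. Then the sequence $(x_i)_{i\ge0}$ converges (at least linearly) to $x^*$.
   Context: $\mathbb{IR}$ is the set of compact real intervals $[a,b]$, with operations $X\circ Y=\{x\circ y: x\in X,y\in Y\}$ for $\circ\in\{+,-,\cdot,/\}$ ($0\notin Y$ for division). $\mathbb{IC}=\{X+iY: X,Y\in\mathbb{IR}\}$ is the set of rectangular complex intervals, where $X+iY=\{x+iy:x\in X,y\in Y\}$, with operations defined for $I=X+iY$, $J=W+iZ$ by $I\pm J=(X\pm W)+i(Y\pm Z)$, $I\cdot J=(X W-YZ)+i(XZ+YW)$, $I/J=\frac{XW+YZ}{WW+ZZ}+i\frac{YW-XZ}{WW+ZZ}$. Operations on $\mathbb{IC}^n$ are componentwise; for an interval matrix $A=(A_{i,j})\in\mathbb{IC}^{n\times n}$ and $I\in\mathbb{IC}^n$, $A\cdot I:=\sum_{j=1}^n I_j\cdot(A_{1,j},\dots,A_{n,j})^T$. A point $x\in\mathbb C^n$ is identified with the degenerate interval vector $[\mathrm{Re}\,x,\mathrm{Re}\,x]+i[\mathrm{Im}\,x,\mathrm{Im}\,x]$.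 An interval enclosure of a map $F:\mathbb C^n\to\mathbb C^m$ is a map $\square F:\mathbb{IC}^n\to\mathbb{IC}^m$ with $\{F(x):x\in I\}\subseteq\square F(I)$ for all $I$; $\square F$ and $\square\mathrm JF$ denote fixed interval enclosures of $F$ and of its Jacobian $\mathrm JF:\mathbb C^n\to\mathbb C^{n\times n}$. For $A\in\mathbb{IC}^{n\times n}$, $\lVert A\rVert_\infty:=\max_{B\in A}\max_{v\in\mathbb C^n\setminus\{0\}}\lVert Bv\rVert_\infty/\lVert v\rVert_\infty$ with $\lVert v\rVert_\infty=\max_i|v_i|$. For $I\in\mathbb{IC}^n$, $x\in\mathbb C^n$ and invertible $Y\in\mathbb C^{n\times n}$, the Krawczyk operator is $K_{x,Y}(I):=x-Y\cdot\square F(x)+(\mathbf 1_n-Y\cdot\square\mathrm JF(I))(I-x)$, where $\mathbf 1_n$ is the identity matrix. $I$ is a strong interval approximate zero of $F$ if there exist $x\in I$ and an invertible $Y\in\mathbb C^{n\times n}$ with $K_{x,Y}(I)\subset I$ and $\sqrt2\,\lVert\mathbf 1_n-Y\cdot\square\mathrm JF(I)\rVert_\infty<1$; such an $I$ contains exactly one zero of $F$. *)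

(* Defs.v *)
From HB Require Import structures.
From mathcomp Require Import all_boot all_order all_algebra.
From mathcomp Require Import classical_sets reals.
From mathcomp Require Import complex.
From mathcomp Require Import mpoly.
Import Order.TTheory GRing.Theory Num.Theory.

Set Implicit Arguments.
Unset Strict Implicit.
Unset Printing Implicit Defensive.

Local Open Scope ring_scope.
Local Open Scope classical_set_scope.

Section IntervalArithmetic.
Variable R : realType.

(** Compact real intervals [a,b], represented by their endpoints.
    The operations are the usual endpoint formulas, which coincide with
    X o Y = {x o y : x in X, y in Y} on (nonempty) intervals. *)
Record IR := mkIR { ilo : R; ihi : R }.

Definition inIR (X : IR) (x : R) : bool := (ilo X <= x) && (x <= ihi X).

Definition iradd (X Y : IR) : IR := mkIR (ilo X + ilo Y) (ihi X + ihi Y).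
Definition irsub (X Y : IR) : IR := mkIR (ilo X - ihi Y) (ihi X - ilo Y).
Definition irmul (X Y : IR) : IR :=
  let p1 := ilo X * ilo Y in let p2 := ilo X * ihi Y in
  let p3 := ihi X * ilo Y in let p4 := ihi X * ihi Y in
  mkIR (Num.min (Num.min p1 p2) (Num.min p3 p4))
       (Num.max (Num.max p1 p2) (Num.max p3 p4)).

Record IC := mkIC { icre : IR; icim : IR }.

Definition inIC (I : IC) (z : R[i]) : bool :=
  inIR (icre I) (complex.Re z) && inIR (icim I) (complex.Im z).

Definition icadd (I J : IC) : IC :=
  mkIC (iradd (icre I) (icre J)) (iradd (icim I) (icim J)).
Definition icsub (I J : IC) : IC :=
  mkIC (irsub (icre I) (icre J)) (irsub (icim I) (icim J)).
(* (X+iY)(W+iZ) = (XW - YZ) + i(XZ + YW) *)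
Definition icmul (I J : IC) : IC :=
  mkIC (irsub (irmul (icre I) (icre J)) (irmul (icim I) (icim J)))
       (iradd (irmul (icre I) (icim J)) (irmul (icim I) (icre J))).

Definition iczero : IC := mkIC (mkIR 0 0) (mkIR 0 0).

Definition icpt (z : R[i]) : IC :=
  mkIC (mkIR (complex.Re z) (complex.Re z)) (mkIR (complex.Im z) (complex.Im z)).

Variable n : nat.

Definition ICvec := 'I_n -> IC.
Definition ICmat := 'I_n -> 'I_n -> IC.

Definition inICv (I : ICvec) (x : 'cV[R[i]]_n) : Prop := forall i, inIC (I i) (x i ord0).
Definition inICm (A : ICmat) (B : 'M[R[i]]_n) : Prop := forall i j, inIC (A i j) (B i j).

Definition icv_subset (I J : ICvec) : Prop := forall x, inICv I x -> inICv J x.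

Definition ptvec (x : 'cV[R[i]]_n) : ICvec := fun i => icpt (x i ord0).
Definition ptmx (Y : 'M[R[i]]_n) : ICmat := fun i j => icpt (Y i j).

Definition icsum (f : 'I_n -> IC) : IC :=
  foldl (fun acc j => icadd acc (f j)) iczero (enum 'I_n).

Definition icvadd (I J : ICvec) : ICvec := fun i => icadd (I i) (J i).
Definition icvsub (I J : ICvec) : ICvec := fun i => icsub (I i) (J i).
Definition icmsub (A B : ICmat) : ICmat := fun i j => icsub (A i j) (B i j).

Definition icmv (A : ICmat) (I : ICvec) : ICvec :=
  fun i => icsum (fun j => icmul (I j) (A i j)).
Definition icmm (A B : ICmat) : ICmat :=
  fun i k => icsum (fun j => icmul (A i j) (B j k)).

Definition cabs (z : R[i]) : R :=
  Num.sqrt (complex.Re z ^+ 2 + complex.Im z ^+ 2).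

Definition vnorm (v : 'cV[R[i]]_n) : R := \big[Num.max/0]_(i < n) cabs (v i ord0).

Definition opnorm (B : 'M[R[i]]_n) : R :=
  sup [set r | exists v : 'cV[R[i]]_n, v != 0 /\ r = vnorm (B *m v) / vnorm v].

Definition imnorm (A : ICmat) : R :=
  sup [set r | exists B, inICm A B /\ r = opnorm B].

Definition evalF (F : 'I_n -> {mpoly R[i][n]}) (x : 'cV[R[i]]_n) : 'cV[R[i]]_n :=
  \col_i (F i).@[fun j => x j ord0].

Definition jacF (F : 'I_n -> {mpoly R[i][n]}) (x : 'cV[R[i]]_n) : 'M[R[i]]_n :=
  \matrix_(i, j) ((F i)^`M(j)).@[fun k => x k ord0].

Definition is_enclosure_F (F : 'I_n -> {mpoly R[i][n]}) (boxF : ICvec -> ICvec) : Prop :=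
  forall I x, inICv I x -> inICv (boxF I) (evalF F x).

Definition is_enclosure_JF (F : 'I_n -> {mpoly R[i][n]}) (boxJF : ICvec -> ICmat) : Prop :=
  forall I x, inICv I x -> inICm (boxJF I) (jacF F x).

Definition krawczyk (boxF : ICvec -> ICvec) (boxJF : ICvec -> ICmat)
    (x : 'cV[R[i]]_n) (Y : 'M[R[i]]_n) (I : ICvec) : ICvec :=
  icvadd (icvsub (ptvec x) (icmv (ptmx Y) (boxF (ptvec x))))
         (icmv (icmsub (ptmx 1%:M) (icmm (ptmx Y) (boxJF I))) (icvsub I (ptvec x))).

Definition strong_iaz_witness (boxF : ICvec -> ICvec) (boxJF : ICvec -> ICmat)
    (I : ICvec) (xt : 'cV[R[i]]_n) (Y : 'M[R[i]]_n) : Prop :=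
  [/\ inICv I xt, Y \in unitmx,
      icv_subset (krawczyk boxF boxJF xt Y I) I &
      Num.sqrt 2 * imnorm (icmsub (ptmx 1%:M) (icmm (ptmx Y) (boxJF I))) < 1].

Definition newton_const_iter (F : 'I_n -> {mpoly R[i][n]}) (Y : 'M[R[i]]_n)
    (x : 'cV[R[i]]_n) (i : nat) : 'cV[R[i]]_n :=
  iter i (fun z => z - Y *m evalF F z) x.

Definition converges_to (u : nat -> 'cV[R[i]]_n) (l : 'cV[R[i]]_n) : Prop :=
  forall eps : R, 0 < eps -> exists N : nat, forall i, (N <= i)%N -> vnorm (u i - l) < eps.

Definition converges_linearly (u : nat -> 'cV[R[i]]_n) (l : 'cV[R[i]]_n) : Prop :=
  exists c : R, 0 <= c /\ c < 1 /\
    forall i, vnorm (u i.+1 - l) <= c * vnorm (u i - l).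

End IntervalArithmetic.

(* Main.v *)
Require Import Defs.
From HB Require Import structures.
From mathcomp Require Import all_boot all_order all_algebra.
From mathcomp Require Import boolp classical_sets reals.
From mathcomp Require Import complex polyrcf.
From mathcomp Require Import mpoly.
From mathcomp Require Import lra ring.
Import Order.TTheory GRing.Theory Num.Theory.
Local Open Scope ring_scope.
Set Implicit Arguments.
Unset Strict Implicit.
Unset Printing Implicit Defensive.

Section IntervalLemmas.
Variable R : realType.
Implicit Types (X Y : IR R) (a b : R).

Lemma inIR_add X Y a b : inIR X a -> inIR Y b -> inIR (iradd X Y) (a + b).
Proof. by case/andP=> h1 h2 /andP[h3 h4]; apply/andP; split; rewrite /= lerD. Qed.

Lemma inIR_sub X Y a b : inIR X a -> inIR Y b -> inIR (irsub X Y) (a - b).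
Proof. by case/andP=> h1 h2 /andP[h3 h4]; apply/andP; split; rewrite /= lerB. Qed.

Lemma mul_between a b u y : a <= u <= b ->
  Num.min (a * y) (b * y) <= u * y <= Num.max (a * y) (b * y).
Proof.
case/andP=> h1 h2; have [y0|y0] := lerP 0 y.
  have h3 : a * y <= u * y by rewrite ler_wpM2r.
  have h4 : u * y <= b * y by rewrite ler_wpM2r.
  by rewrite ge_min le_max h3 h4 orbT.
have h3 : u * y <= a * y by rewrite ler_wnM2r // ltW.
have h4 : b * y <= u * y by rewrite ler_wnM2r // ltW.
by rewrite ge_min le_max h3 h4 orbT.
Qed.

Lemma mul_between2 a b u y : a <= u <= b ->
  Num.min (y * a) (y * b) <= y * u <= Num.max (y * a) (y * b).
Proof. by rewrite ![y * _]mulrC; apply: mul_between. Qed.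

Lemma inIR_mul X Y a b : inIR X a -> inIR Y b -> inIR (irmul X Y) (a * b).
Proof.
move=> hX hY; rewrite /irmul /inIR /=.
have /andP[m1 m2] := mul_between b hX.
have /andP[m3 m4] := mul_between2 (ilo X) hY.
have /andP[m5 m6] := mul_between2 (ihi X) hY.
apply/andP; split.
  apply: le_trans m1; rewrite le_min; apply/andP; split.
    by apply: le_trans m3; rewrite ge_min lexx.
  by apply: le_trans m5; rewrite ge_min lexx orbT.
apply: le_trans m2 _; rewrite ge_max; apply/andP; split.
  by apply: le_trans m4 _; rewrite le_max lexx.
by apply: le_trans m6 _; rewrite le_max lexx orbT.
Qed.

Implicit Types (z w : R[i]).

Lemma inIC_add (I J : IC R) z w : inIC I z -> inIC J w -> inIC (icadd I J) (z + w).
Proof.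
case: z w => [z1 z2] [w1 w2] /andP[h1 h2] /andP[h3 h4].
by apply/andP; split; rewrite /= ?inIR_add.
Qed.

Lemma inIC_sub (I J : IC R) z w : inIC I z -> inIC J w -> inIC (icsub I J) (z - w).
Proof.
case: z w => [z1 z2] [w1 w2] /andP[h1 h2] /andP[h3 h4].
by apply/andP; split; rewrite /= ?inIR_sub.
Qed.

Lemma inIC_mul (I J : IC R) z w : inIC I z -> inIC J w -> inIC (icmul I J) (z * w).
Proof.
case: z w => [z1 z2] [w1 w2] /andP[h1 h2] /andP[h3 h4].
apply/andP; split; rewrite /=.
  by apply: inIR_sub; apply: inIR_mul.
by apply: inIR_add; apply: inIR_mul.
Qed.

Lemma inIC_zero : inIC (@iczero R) 0.
Proof. by rewrite /inIC /inIR /= lexx. Qed.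

Lemma inIC_pt z : inIC (icpt z) z.
Proof. by rewrite /inIC /inIR /= !lexx. Qed.

Variable n : nat.

Lemma inIC_sum (f : 'I_n -> IC R) (g : 'I_n -> R[i]) :
  (forall j, inIC (f j) (g j)) -> inIC (icsum f) (\sum_j g j).
Proof.
move=> hfg; rewrite /icsum -big_enum /=.
have gen : forall (s : seq 'I_n) (acc : IC R) (a : R[i]), inIC acc a ->
    inIC (foldl (fun acc j => icadd acc (f j)) acc s) (a + \sum_(j <- s) g j).
  elim=> [|j s IH] acc a ha; first by rewrite big_nil addr0.
  by rewrite big_cons /= addrA; apply: IH; apply: inIC_add.
by have := gen (enum 'I_n) _ _ inIC_zero; rewrite add0r.
Qed.

Lemma inICv_pt (x : 'cV[R[i]]_n) : inICv (ptvec x) x.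
Proof. by move=> i; apply: inIC_pt. Qed.

Lemma inICm_pt (Y : 'M[R[i]]_n) : inICm (ptmx Y) Y.
Proof. by move=> i j; apply: inIC_pt. Qed.

Implicit Types (I J : ICvec R n) (A B : ICmat R n) (x y : 'cV[R[i]]_n) (M N : 'M[R[i]]_n).

Lemma inICv_add I J x y : inICv I x -> inICv J y -> inICv (icvadd I J) (x + y).
Proof. by move=> h1 h2 i; rewrite mxE; apply: inIC_add. Qed.

Lemma inICv_sub I J x y : inICv I x -> inICv J y -> inICv (icvsub I J) (x - y).
Proof. by move=> h1 h2 i; rewrite !mxE; apply: inIC_sub. Qed.

Lemma inICm_sub A B M N : inICm A M -> inICm B N -> inICm (icmsub A B) (M - N).
Proof. by move=> h1 h2 i j; rewrite !mxE; apply: inIC_sub. Qed.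

Lemma inICv_mv A M I x : inICm A M -> inICv I x -> inICv (icmv A I) (M *m x).
Proof.
move=> hA hI i; rewrite mxE; apply: inIC_sum => j.
by rewrite mulrC; apply: inIC_mul.
Qed.

Lemma inICm_mm A B M N : inICm A M -> inICm B N -> inICm (icmm A B) (M *m N).
Proof.
move=> hA hB i k; rewrite mxE; apply: inIC_sum => j.
by apply: inIC_mul.
Qed.

End IntervalLemmas.

Section Norms.
Local Open Scope classical_set_scope.
Local Open Scope complex_scope.
Variable R : realType.
Implicit Types (z w : R[i]).

Lemma cabsC z : (cabs z)%:C = `|z|.
Proof. by rewrite normc_def. Qed.

Lemma cabs_ge0 z : 0 <= cabs z.
Proof. exact: sqrtr_ge0. Qed.

Lemma cabs_add z w : cabs (z + w) <= cabs z + cabs w.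
Proof. by rewrite -lecR rmorphD /= !cabsC ler_normD. Qed.

Lemma cabs_mul z w : cabs (z * w) = cabs z * cabs w.
Proof. by apply: complexI; rewrite rmorphM /= !cabsC normrM. Qed.

Lemma cabs0 : cabs (0 : R[i]) = 0.
Proof. by apply: complexI; rewrite cabsC normr0. Qed.

Lemma cabs_eq0 z : cabs z = 0 -> z = 0.
Proof. by move=> h; apply/eqP; rewrite -normr_eq0 -cabsC h. Qed.

Lemma cabs_sub z w : cabs (z - w) = cabs (w - z).
Proof. by apply: complexI; rewrite !cabsC distrC. Qed.

Lemma cabs_sum (I : Type) (r : seq I) (g : I -> R[i]) :
  cabs (\sum_(j <- r) g j) <= \sum_(j <- r) cabs (g j).
Proof.
elim: r => [|j r IH]; first by rewrite !big_nil cabs0.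
rewrite !big_cons; apply: le_trans (cabs_add _ _) _; exact: lerD.
Qed.

Lemma cabs_le_ReIm z : cabs z <= `|complex.Re z| + `|complex.Im z|.
Proof.
rewrite /cabs; set a := complex.Re z; set b := complex.Im z.
have ea : a ^+ 2 = `|a| ^+ 2 by rewrite real_normK ?num_real.
have eb : b ^+ 2 = `|b| ^+ 2 by rewrite real_normK ?num_real.
have ha := normr_ge0 a; have hb := normr_ge0 b.
have h : a ^+ 2 + b ^+ 2 <= (`|a| + `|b|) ^+ 2.
  rewrite ea eb sqrrD lerD2r lerDl; exact: mulrn_wge0 (mulr_ge0 ha hb).
apply: le_trans (ler_wsqrtr h) _.
by rewrite sqrtr_sqr ger0_norm // addr_ge0.
Qed.

Definition ibnd (X : IR R) : R := `|ilo X| + `|ihi X|.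
Definition icbnd (I : IC R) : R := ibnd (icre I) + ibnd (icim I).

Lemma inIR_bnd X a : inIR X a -> `|a| <= ibnd X.
Proof.
case/andP=> h1 h2; rewrite /ibnd ler_norml.
have := ler_norml (ilo X) `|ilo X|; rewrite lexx => /esym /andP[l1 l2].
have := ler_norml (ihi X) `|ihi X|; rewrite lexx => /esym /andP[l3 l4].
apply/andP; split; lra.
Qed.

Lemma inIC_bnd I z : inIC I z -> cabs z <= icbnd I.
Proof.
case/andP=> h1 h2; apply: le_trans (cabs_le_ReIm z) _.
by apply: lerD; apply: inIR_bnd.
Qed.

Variable n : nat.
Implicit Types (v : 'cV[R[i]]_n) (M : 'M[R[i]]_n).

Lemma vnorm_ge0 v : 0 <= vnorm v.
Proof.
rewrite /vnorm; elim/big_ind: _ => //= [a b ha hb|i _]; last exact: cabs_ge0.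
by rewrite le_max ha.
Qed.

Lemma cabs_le_vnorm v i : cabs (v i ord0) <= vnorm v.
Proof. exact: le_bigmax. Qed.

Lemma vnorm_le v r : 0 <= r -> (forall i, cabs (v i ord0) <= r) -> vnorm v <= r.
Proof. by move=> r0 h; apply: bigmax_le. Qed.

Lemma vnorm0 : vnorm (0 : 'cV[R[i]]_n) = 0.
Proof.
apply/eqP; rewrite eq_le vnorm_ge0 andbT; apply: vnorm_le => // i.
by rewrite mxE cabs0.
Qed.

Lemma vnorm_eq0 v : vnorm v = 0 -> v = 0.
Proof.
move=> h; apply/matrixP => i j; rewrite (ord1 j) mxE; apply: cabs_eq0.
by apply/eqP; rewrite eq_le cabs_ge0 -h cabs_le_vnorm.
Qed.

Definition Kb M : R := \sum_i \sum_j cabs (M i j).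

Lemma Kb_ge0 M : 0 <= Kb M.
Proof. by apply: sumr_ge0 => i _; apply: sumr_ge0 => j _; apply: cabs_ge0. Qed.

Lemma vnorm_mul_le M v : vnorm (M *m v) <= Kb M * vnorm v.
Proof.
apply: vnorm_le; first by rewrite mulr_ge0 ?Kb_ge0 ?vnorm_ge0.
move=> i; rewrite mxE.
have h1 := cabs_sum (index_enum 'I_n) (fun j => M i j * v j ord0).
apply: le_trans h1 _.
apply: (@le_trans _ _ (\sum_j cabs (M i j) * vnorm v)).
  apply: ler_sum => j _; rewrite cabs_mul ler_wpM2l ?cabs_ge0 //.
  exact: cabs_le_vnorm.
rewrite -mulr_suml ler_wpM2r ?vnorm_ge0 // /Kb [X in _ <= X](bigD1 i) //= lerDl.
by apply: sumr_ge0 => k _; apply: sumr_ge0 => j _; apply: cabs_ge0.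
Qed.

Definition opset M := [set r | exists v : 'cV[R[i]]_n, v != 0 /\ r = vnorm (M *m v) / vnorm v].

Lemma vnorm_gt0 v : v != 0 -> 0 < vnorm v.
Proof.
move=> hv; rewrite lt_def vnorm_ge0 andbT; apply/eqP => /vnorm_eq0 h.
by rewrite h eqxx in hv.
Qed.

Lemma opset_ub M K : (forall v, vnorm (M *m v) <= K * vnorm v) ->
  ubound (opset M) K.
Proof.
move=> hK; rewrite /ubound /= => r [v [hv ->]]; rewrite ler_pdivrMr ?vnorm_gt0 //.
Qed.

Lemma opnorm_le M K : 0 <= K -> (forall v, vnorm (M *m v) <= K * vnorm v) ->
  opnorm M <= K.
Proof.
move=> K0 hK; rewrite /opnorm -/(opset M).
have [ne|e] := pselect (opset M !=set0).
  by apply: ge_sup => //; apply: opset_ub.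
by move/nonemptyPn: e => ->; rewrite sup0.
Qed.

Lemma opnorm_ub M v : vnorm (M *m v) <= opnorm M * vnorm v.
Proof.
have [->|hv] := eqVneq v 0; first by rewrite mulmx0 vnorm0 mulr0.
rewrite -ler_pdivrMr ?vnorm_gt0 //.
apply: ub_le_sup; last by exists v.
by exists (Kb M); apply: opset_ub => w; apply: vnorm_mul_le.
Qed.

Lemma imnorm_ub A M : inICm A M -> opnorm M <= imnorm A.
Proof.
move=> hM; apply: ub_le_sup; last by exists M.
exists (\sum_i \sum_j icbnd (A i j)) => r [N [hN ->]].
apply: le_trans (opnorm_le (Kb_ge0 N) (@vnorm_mul_le N)) _.
by apply: ler_sum => i _; apply: ler_sum => j _; apply: inIC_bnd.
Qed.

Lemma contraction A M v : inICm A M -> vnorm (M *m v) <= imnorm A * vnorm v.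
Proof.
move=> hM; apply: le_trans (opnorm_ub M v) _.
by rewrite ler_wpM2r ?vnorm_ge0 ?imnorm_ub.
Qed.

End Norms.

Section Line.
Variable R : realType.
Variable n : nat.
Local Notation C := R[i].
Variables (y d : 'I_n -> C).

Definition lineh (j : 'I_n) : {poly C} := (y j)%:P + (d j)%:P * 'X.

Definition Phi (p : {mpoly C[n]}) : {poly C} := mmap (@polyC C) lineh p.

Lemma PhiD p q : Phi (p + q) = Phi p + Phi q.
Proof. exact: mmapD. Qed.

Lemma PhiM p q : Phi (p * q) = Phi p * Phi q.
Proof. exact: rmorphM. Qed.

Lemma PhiC c : Phi c%:MP = c%:P.
Proof. exact: mmapC. Qed.

Lemma PhiX j : Phi 'X_j = lineh j.
Proof. by rewrite /Phi mmapX mmap1U. Qed.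

Lemma Phi_horner p t : (Phi p).[t] = p.@[fun j => y j + d j * t].
Proof.
elim/mpolyind: p => [|c m p _ _ IH]; first by rewrite /Phi mmap0 horner0 meval0.
rewrite PhiD hornerD IH mevalD; congr (_ + _).
rewrite /Phi mmapZ mmapX hornerM hornerC mevalZ mevalX /mmap1 horner_prod.
congr (_ * _); apply: eq_bigr => j _; rewrite horner_exp /lineh.
by rewrite hornerD hornerC hornerM hornerC hornerX.
Qed.

Definition chainP (p : {mpoly C[n]}) :=
  deriv (Phi p) = \sum_j Phi (p^`M(j)) * (d j)%:P.

Lemma chainD p q : chainP p -> chainP q -> chainP (p + q).
Proof.
rewrite /chainP => hp hq; rewrite PhiD derivD hp hq -big_split /=.
by apply: eq_bigr => j _; rewrite mderivD PhiD mulrDl.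
Qed.

Lemma chainM p q : chainP p -> chainP q -> chainP (p * q).
Proof.
rewrite /chainP => hp hq; rewrite PhiM derivM hp hq mulr_suml mulr_sumr -big_split /=.
by apply: eq_bigr => j _; rewrite mderivM PhiD !PhiM; ring.
Qed.

Lemma chainC c : chainP c%:MP.
Proof.
rewrite /chainP PhiC derivC big1 // => j _.
by rewrite mderivC -(mpolyC0) PhiC mul0r.
Qed.

Lemma chainX i : chainP 'X_i.
Proof.
rewrite /chainP PhiX /lineh derivD derivC add0r derivM derivC mul0r add0r derivX mulr1.
rewrite (bigD1 i) //= big1 ?addr0.
  rewrite mderivX mnm1E eqxx (_ : (U_(i) - U_(i))%MM = 0%MM); last first.
    by apply/mnmP => k; rewrite mnmBE subnn mnm0E.
  by rewrite mpolyX0 scale1r -mpolyC1 PhiC mul1r.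
move=> j /negbTE hji; rewrite mderivX mnm1E eq_sym hji scale0r.
by rewrite -mpolyC0 PhiC mul0r.
Qed.

Lemma chain p : chainP p.
Proof.
elim/mpolyind: p => [|c m p _ _ IH]; first by rewrite -mpolyC0; apply: chainC.
apply: chainD; last exact: IH. rewrite -mul_mpolyC. apply: chainM; first exact: chainC.
rewrite mpolyXE_id. apply: (big_ind chainP).
- by rewrite -mpolyC1; apply: chainC.
- exact: chainM.
move=> j _; elim: (m j) => [|k IHk].
  by rewrite expr0 -mpolyC1; apply: chainC.
by rewrite exprS; apply: chainM; [exact: chainX | exact: IHk].
Qed.
End Line.

Section Prim.
Local Open Scope complex_scope.
Variable R : realType.
Local Notation C := R[i].

Lemma Re_add (z w : C) : complex.Re (z + w) = complex.Re z + complex.Re w.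
Proof. by case: z w => [a b] [c d]. Qed.
Lemma Im_add (z w : C) : complex.Im (z + w) = complex.Im z + complex.Im w.
Proof. by case: z w => [a b] [c d]. Qed.
Lemma Re_opp (z : C) : complex.Re (- z) = - complex.Re z.
Proof. by case: z. Qed.
Lemma Im_opp (z : C) : complex.Im (- z) = - complex.Im z.
Proof. by case: z. Qed.
Lemma Re_MN (z : C) k : complex.Re (z *+ k) = complex.Re z *+ k.
Proof. by elim: k => [|k IH]; rewrite ?mulr0n // !mulrS Re_add IH. Qed.
Lemma Im_MN (z : C) k : complex.Im (z *+ k) = complex.Im z *+ k.
Proof. by elim: k => [|k IH]; rewrite ?mulr0n // !mulrS Im_add IH. Qed.
Lemma Re_mulR (z : C) r : complex.Re (z * r%:C) = complex.Re z * r.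
Proof. by case: z => a b; rewrite /= mulr0 subr0. Qed.
Lemma Im_mulR (z : C) r : complex.Im (z * r%:C) = complex.Im z * r.
Proof. by case: z => a b; rewrite /= mulr0 add0r. Qed.
Lemma Re_sum (I : Type) (r : seq I) (g : I -> C) :
  complex.Re (\sum_(j <- r) g j) = \sum_(j <- r) complex.Re (g j).
Proof. by elim: r => [|j r IH]; rewrite ?big_nil // !big_cons Re_add IH. Qed.
Lemma Im_sum (I : Type) (r : seq I) (g : I -> C) :
  complex.Im (\sum_(j <- r) g j) = \sum_(j <- r) complex.Im (g j).
Proof. by elim: r => [|j r IH]; rewrite ?big_nil // !big_cons Im_add IH. Qed.

Definition prim (p : {poly C}) : {poly C} :=
  \poly_(k < (size p).+1) (if k is k'.+1 then p`_k' / k'.+1%:R else 0).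

Lemma coef_prim p k : (prim p)`_k = if k is k'.+1 then p`_k' / k'.+1%:R else 0.
Proof.
rewrite coef_poly; case: k => [|k] //=; case: ltnP => // hk.
by rewrite nth_default ?mul0r.
Qed.

Lemma primD p q : prim (p + q) = prim p + prim q.
Proof.
by apply/polyP => k; rewrite coefD !coef_prim; case: k => [|k]; rewrite ?addr0 // coefD mulrDl.
Qed.

Lemma primZ c p : prim (c *: p) = c *: prim p.
Proof.
by apply/polyP => k; rewrite coefZ !coef_prim; case: k => [|k]; rewrite ?mulr0 // coefZ mulrA.
Qed.

Lemma prim0 : prim 0 = 0.
Proof. by apply/polyP => k; rewrite coef_prim coef0; case: k => // k; rewrite coef0 mul0r. Qed.

Lemma prim_sum (I : Type) (r : seq I) (F : I -> {poly C}) :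
  prim (\sum_(j <- r) F j) = \sum_(j <- r) prim (F j).
Proof. by elim: r => [|j r IH]; rewrite ?big_nil ?prim0 // !big_cons primD IH. Qed.

Lemma nat_unit k : (k.+1%:R : C) != 0.
Proof. by rewrite pnatr_eq0. Qed.

Lemma prim_derivK p : prim (deriv p) = p - (p`_0)%:P.
Proof.
apply/polyP => k; rewrite coef_prim coefB coefC; case: k => [|k] /=; first by rewrite subrr.
by rewrite coef_deriv subr0 -[p`_k.+1 *+ _]mulr_natr mulfK // nat_unit.
Qed.

Lemma deriv_prim p : deriv (prim p) = p.
Proof.
by apply/polyP => k; rewrite coef_deriv coef_prim -[_ *+ k.+1]mulr_natr divfK // nat_unit.
Qed.

Lemma prim_horner0 p : (prim p).[0] = 0.
Proof. by rewrite horner_coef0 coef_prim. Qed.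

Definition reP (p : {poly C}) : {poly R} := \poly_(k < size p) complex.Re p`_k.
Definition imP (p : {poly C}) : {poly R} := \poly_(k < size p) complex.Im p`_k.

Lemma coef_reP p k : (reP p)`_k = complex.Re p`_k.
Proof. by rewrite coef_poly; case: ltnP => // hk; rewrite nth_default. Qed.
Lemma coef_imP p k : (imP p)`_k = complex.Im p`_k.
Proof. by rewrite coef_poly; case: ltnP => // hk; rewrite nth_default. Qed.

Lemma reP_deriv p : deriv (reP p) = reP (deriv p).
Proof. by apply/polyP => k; rewrite coef_deriv !coef_reP coef_deriv Re_MN. Qed.
Lemma imP_deriv p : deriv (imP p) = imP (deriv p).
Proof. by apply/polyP => k; rewrite coef_deriv !coef_imP coef_deriv Im_MN. Qed.

Lemma reP_horner p t : (reP p).[t] = complex.Re (p.[t%:C]).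
Proof.
rewrite (horner_coef_wide _ (size_poly _ _)) horner_coef Re_sum.
by apply: eq_bigr => k _; rewrite coef_reP -rmorphXn Re_mulR.
Qed.
Lemma imP_horner p t : (imP p).[t] = complex.Im (p.[t%:C]).
Proof.
rewrite (horner_coef_wide _ (size_poly _ _)) horner_coef Im_sum.
by apply: eq_bigr => k _; rewrite coef_imP -rmorphXn Im_mulR.
Qed.

Lemma prim_re_between (G : {poly C}) lo hi :
  (forall c : R, 0 < c < 1 -> lo <= complex.Re (G.[c%:C]) <= hi) ->
  lo <= complex.Re ((prim G).[1]) <= hi.
Proof.
move=> h; have [c hc e] := poly_mvt (reP (prim G)) (@ltr01 R).
move: e; rewrite reP_deriv deriv_prim !reP_horner rmorph0 rmorph1 prim_horner0.
rewrite (_ : complex.Re 0 = 0) // !subr0 mulr1 => ->; apply: h.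
by rewrite in_itv /= in hc.
Qed.

Lemma prim_im_between (G : {poly C}) lo hi :
  (forall c : R, 0 < c < 1 -> lo <= complex.Im (G.[c%:C]) <= hi) ->
  lo <= complex.Im ((prim G).[1]) <= hi.
Proof.
move=> h; have [c hc e] := poly_mvt (imP (prim G)) (@ltr01 R).
move: e; rewrite imP_deriv deriv_prim !imP_horner rmorph0 rmorph1 prim_horner0.
rewrite (_ : complex.Im 0 = 0) // !subr0 mulr1 => ->; apply: h.
by rewrite in_itv /= in hc.
Qed.

End Prim.

Section MVT.
Local Open Scope complex_scope.
Variable R : realType.
Variable n : nat.
Local Notation C := R[i].

Lemma inIR_convex (X : IR R) a b c : inIR X a -> inIR X b -> 0 <= c <= 1 ->
  inIR X (b + (a - b) * c).
Proof.
case/andP=> h1 h2 /andP[h3 h4] /andP[c0 c1]; apply/andP; split; nra.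
Qed.

Lemma convex_in (I : ICvec R n) (x y : 'cV[C]_n) (c : R) :
  inICv I x -> inICv I y -> 0 <= c <= 1 ->
  inICv I (\col_k (y k ord0 + (x k ord0 - y k ord0) * c%:C)).
Proof.
move=> hx hy hc k; rewrite mxE.
have /andP[hx1 hx2] := hx k; have /andP[hy1 hy2] := hy k.
apply/andP; split.
  rewrite Re_add Re_mulR Re_add Re_opp; exact: inIR_convex.
rewrite Im_add Im_mulR Im_add Im_opp; exact: inIR_convex.
Qed.

Lemma mvt_box (F : 'I_n -> {mpoly C[n]}) (boxJF : ICvec R n -> ICmat R n)
    (hJF : is_enclosure_JF F boxJF) (I : ICvec R n) (x y : 'cV[C]_n) :
  inICv I x -> inICv I y ->
  exists M, inICm (boxJF I) M /\ evalF F x - evalF F y = M *m (x - y).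
Proof.
move=> hx hy.
pose yv := fun j => y j ord0; pose dv := fun j => x j ord0 - y j ord0.
exists (\matrix_(i, j) (prim (Phi yv dv ((F i)^`M(j)))).[1]); split.
  move=> i j; rewrite mxE.
  have key : forall c : R, 0 < c < 1 ->
      inIC (boxJF I i j) ((Phi yv dv (F i)^`M(j)).[c%:C]).
    move=> c /andP[c0 c1].
    have hz := convex_in hx hy (c := c); rewrite ltW ?c0 ?ltW ?c1 // in hz.
    have := hJF _ _ (hz isT) i j; rewrite /jacF mxE Phi_horner.
    by rewrite (meval_eq _ (v2 := fun k => yv k + dv k * c%:C)) // => k; rewrite mxE.
  apply/andP; split.
    by apply: prim_re_between => c hc; have /andP[] := key c hc.
  by apply: prim_im_between => c hc; have /andP[] := key c hc.
apply/matrixP => i k; rewrite (ord1 k) !mxE.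
under eq_bigr do rewrite !mxE.
set H := Phi yv dv (F i).
have e1 : H.[1] = (F i).@[fun j => x j ord0].
  by rewrite Phi_horner; apply: meval_eq => j; rewrite /yv /dv mulr1 addrC subrK.
have e0 : H.[0] = (F i).@[fun j => y j ord0].
  by rewrite Phi_horner; apply: meval_eq => j; rewrite /yv mulr0 addr0.
rewrite -e1 -e0.
have e2 : H.[1] - H.[0] = (prim (deriv H)).[1].
  by rewrite prim_derivK hornerD hornerN hornerC horner_coef0.
rewrite e2 /H chain prim_sum horner_sum; apply: eq_bigr => j _.
by rewrite mulrC mul_polyC primZ hornerZ mulrC.
Qed.

End MVT.

Lemma zmod_id (V : zmodType) (u xt a b : V) : u - b = xt - a + ((u - xt) - (b - a)).
Proof. by rewrite opprB addrACA [xt + _]addrC subrK addKr. Qed.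

Lemma bernoulli_ineq (R : realType) (h : R) N : 0 <= h -> 1 + N%:R * h <= (1 + h) ^+ N.
Proof.
move=> h0; elim: N => [|N IH]; first by rewrite mul0r addr0 expr0.
rewrite exprS -natr1 mulrDl mul1r.
have hN : 0 <= N%:R * h by rewrite mulr_ge0.
nra.
Qed.

Lemma geo_small (R : realType) (q e : R) : 0 <= q -> q < 1 -> 0 < e ->
  exists N, q ^+ N < e.
Proof.
move=> q0 q1 e0; have [->|qn0] := eqVneq q 0; first by exists 1%N; rewrite expr1.
have qp : 0 < q by rewrite lt_def qn0 q0.
set h := q^-1 - 1.
have hp : 0 < h by rewrite /h subr_gt0 invf_gt1.
have eh : 0 < e * h by rewrite mulr_gt0.
have hpos : 0 <= (e * h)^-1 by rewrite invr_ge0 ltW.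
have := archi_boundP hpos; set N := Num.Def.archi_bound _ => hN.
exists N.
have eX : q ^+ N = ((1 + h) ^+ N)^-1 by rewrite /h addrC subrK -exprVn invrK.
have X0 : 0 < (1 + h) ^+ N by rewrite exprn_gt0 // addr_gt0.
rewrite eX -[_^-1]mul1r ltr_pdivrMr //.
have B := bernoulli_ineq N (ltW hp).
rewrite -[(e * h)^-1]mul1r ltr_pdivrMr // in hN.
nra.
Qed.

Local Open Scope ring_scope.
Theorem proposition4p9 (R : realType) (n : nat)
    (F : 'I_n -> {mpoly R[i][n]})
    (boxF : ICvec R n -> ICvec R n) (boxJF : ICvec R n -> ICmat R n)
    (hF : is_enclosure_F F boxF) (hJF : is_enclosure_JF F boxJF)
    (I : ICvec R n) (xt : 'cV[R[i]]_n) (Y : 'M[R[i]]_n)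
    (hI : strong_iaz_witness boxF boxJF I xt Y)
    (xstar : 'cV[R[i]]_n) (hxstar_in : inICv I xstar) (hxstar0 : evalF F xstar = 0)
    (x : 'cV[R[i]]_n) (hx : inICv I x) :
  converges_to (newton_const_iter F Y x) xstar /\
  converges_linearly (newton_const_iter F Y x) xstar.
Proof.
case: hI => hxt hY hK hnorm.
set A := icmsub (ptmx 1%:M) (icmm (ptmx Y) (boxJF I)).
have hA : forall M, inICm (boxJF I) M -> inICm A (1%:M - Y *m M).
  move=> M hM; apply: inICm_sub; first exact: inICm_pt.
  by apply: inICm_mm => //; exact: inICm_pt.
set c := imnorm A.
have c1 : c < 1.
  have s2 : 1 < Num.sqrt (2 : R) by rewrite -{1}sqrtr1 ltr_sqrt // ltr1n.
  have [hc|hc] := lerP c 0; first by apply: le_lt_trans hc ltr01.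
  by rewrite -/c in hnorm; nra.
set k := Num.max c 0.
have k0 : 0 <= k by rewrite le_max lexx orbT.
have k1 : k < 1 by rewrite gt_max c1 ltr01.
have ck : c <= k by rewrite le_max lexx.
set u := newton_const_iter F Y x.
have uS : forall m, u m.+1 = u m - Y *m evalF F (u m) by [].
have inI : forall m, inICv I (u m).
  elim=> [|m IH]; first exact: hx.
  rewrite uS; have [M [hM eM]] := mvt_box hJF IH hxt.
  apply: hK.
  have -> : u m - Y *m evalF F (u m) =
      (xt - Y *m evalF F xt) + (1%:M - Y *m M) *m (u m - xt).
    rewrite mulmxBl mul1mx -mulmxA -eM mulmxBr.
    exact: zmod_id.
  apply: inICv_add.
    apply: inICv_sub; first exact: inICv_pt.
    apply: inICv_mv; first exact: inICm_pt.
    by apply: hF; exact: inICv_pt.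
  apply: inICv_mv; first exact: hA.
  by apply: inICv_sub => //; exact: inICv_pt.
have step : forall m, vnorm (u m.+1 - xstar) <= k * vnorm (u m - xstar).
  move=> m; have [M [hM eM]] := mvt_box hJF (inI m) hxstar_in.
  rewrite hxstar0 subr0 in eM.
  have -> : u m.+1 - xstar = (1%:M - Y *m M) *m (u m - xstar).
    by rewrite uS eM mulmxBl mul1mx mulmxA addrAC.
  apply: le_trans (contraction _ (hA _ hM)) _.
  by rewrite ler_wpM2r ?vnorm_ge0.
have geo : forall m, vnorm (u m - xstar) <= k ^+ m * vnorm (u 0%N - xstar).
  elim=> [|m IH]; first by rewrite expr0 mul1r.
  rewrite exprS -mulrA; apply: le_trans (step m) _.
  by rewrite ler_wpM2l.
split; last by exists k.
move=> eps eps0.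
have e0 := vnorm_ge0 (u 0%N - xstar).
have [N hN] := geo_small k0 k1 (divr_gt0 eps0 (ltr_wpDl e0 ltr01)).
exists N => m hm; apply: le_lt_trans (geo m) _.
rewrite ltr_pdivlMr ?ltr_wpDl // in hN.
apply: le_lt_trans hN.
apply: ler_pM.
- exact: exprn_ge0.
- exact: e0.
- by apply: (ler_wiXn2l k0 (ltW k1)); exact: hm.
- by rewrite lerDl.
Qed.
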